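(* Let $P_0=\mathrm{SO}(5)\times_{\phi_0}\mathrm{SO}(3)\cong V^{5,2}\times\mathrm{SO}(3)$ be the homogeneous $\mathrm{SO}(3)$-principal bundle over $V^{5,2}=\mathrm{SO}(5)/\mathrm{SO}(3)$ induced by the trivial homomorphism $\phi_0:\mathrm{SO}(3)\to\mathrm{SO}(3)$. The $\mathrm{SO}(5)$-invariant connections on $P_0$ are exactly those corresponding to linear maps $\alpha:\mathfrak{so}(5)\to\mathfrak{so}(3)$ of the form $$\alpha=e^1\otimes(b_8e_8+b_9e_9+b_{10}e_{10}),\qquad b_8,b_9,b_{10}\in\mathbb{R}.$$ Furthermore, the curvature $F_\alpha$ of such a connection lies in $\Omega^2_1(\mathfrak{so}(3))$, i.e. it is of the form $\omega\otimes v$ times a constant for a fixed $v\in\mathfrak{so}(3)$, where $\omega$ is the invariant 2-form corresponding to $e^{25}+e^{36}+e^{47}$.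
   Context: Basis of $\mathfrak{so}(5)$ (with $E_{ij}$ the elementary $5\times5$ matrices): $e_1=E_{12}-E_{21}$, $e_2=E_{13}-E_{31}$, $e_3=E_{14}-E_{41}$, $e_4=E_{15}-E_{51}$, $e_5=E_{23}-E_{32}$, $e_6=E_{24}-E_{42}$, $e_7=E_{25}-E_{52}$, $e_8=E_{34}-E_{43}$, $e_9=E_{35}-E_{53}$, $e_{10}=E_{54}-E_{45}$; bracket = commutator. $\mathrm{SO}(3)\subset\mathrm{SO}(5)$ has Lie algebra $\mathfrak{so}(3)=\mathrm{span}\{e_8,e_9,e_{10}\}$; the target group $\mathrm{SO}(3)$ is identified with this subgroup. $e^1,\dots,e^{10}$ is the dual basis of $\mathfrak{so}(5)^*$. For a homomorphism $\phi:H\to K$, $P=G\times_\phi K\to G/H$ is a homogeneous $K$-bundle, and $G$-invariant connections on $P$ correspond bijectively to linear maps $\alpha:\mathfrak g\to\mathfrak k$ with $\alpha|_{\mathfrak h}=\phi_*$ and $\alpha\circ\mathrm{Ad}(h)=\mathrm{Ad}(\phi(h))\circ\alpha$ for all $h\in H$ (Wang's theorem). The curvature of the connection is the invariant $\mathfrak k$-valued 2-form given on $\mathfrak m=\mathrm{span}\{e_1,\dots,e_7\}$ by $F(X,Y)=[\alpha X,\alpha Y]-\alpha([X,Y])$. $\Omega^2_1(\mathfrak{so}(3))$ denotes $\mathfrak{so}(3)$-valued 2-forms of the form $f\,\omega$ with $\omega=e^{25}+e^{36}+e^{47}$ (the transverse Kähler form line in the $\mathrm{SU}(3)$-decomposition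 $\Omega^2_1\oplus\Omega^2_6\oplus\Omega^2_8$ of transverse 2-forms). *)

(* Defs.v *)
From HB Require Import structures.
From mathcomp Require Import all_boot all_order all_algebra.
From mathcomp Require Import reals.
Set Implicit Arguments. Unset Strict Implicit. Unset Printing Implicit Defensive.
Import Order.TTheory GRing.Theory Num.Theory.
Local Open Scope ring_scope.

Section SO5.
Variable R : realType.

(* elementary matrix E_{ij}, with 1-based indices as in the paper *)
Definition Emx (i j : nat) : 'M[R]_5 := delta_mx (inord i.-1) (inord j.-1).

Definition eb (k : nat) : 'M[R]_5 :=
  match k with
  | 1 => Emx 1 2 - Emx 2 1
  | 2 => Emx 1 3 - Emx 3 1
  | 3 => Emx 1 4 - Emx 4 1
  | 4 => Emx 1 5 - Emx 5 1
  | 5 => Emx 2 3 - Emx 3 2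
  | 6 => Emx 2 4 - Emx 4 2
  | 7 => Emx 2 5 - Emx 5 2
  | 8 => Emx 3 4 - Emx 4 3
  | 9 => Emx 3 5 - Emx 5 3
  | 10 => Emx 5 4 - Emx 4 5
  | _ => 0
  end.

(* dual basis e^1, ..., e^10 (as linear functionals, read off the
   entry where the corresponding e_k has a +1) *)
Definition entry (X : 'M[R]_5) (i j : nat) : R := X (inord i.-1) (inord j.-1).
Definition ed (k : nat) (X : 'M[R]_5) : R :=
  match k with
  | 1 => entry X 1 2
  | 2 => entry X 1 3
  | 3 => entry X 1 4
  | 4 => entry X 1 5
  | 5 => entry X 2 3
  | 6 => entry X 2 4
  | 7 => entry X 2 5
  | 8 => entry X 3 4
  | 9 => entry X 3 5
  | 10 => entry X 5 4
  | _ => 0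
  end.

(* basis indexed by 'I_10 : index i stands for e_{i+1} *)
Definition ebo (i : 'I_10) := eb i.+1.
Definition edo (i : 'I_10) := ed i.+1.

Definition lbr (X Y : 'M[R]_5) : 'M[R]_5 := X *m Y - Y *m X.

Definition in_so5 (X : 'M[R]_5) : Prop :=
  exists c : 'I_10 -> R, X = \sum_(i < 10) c i *: ebo i.

Definition in_so3 (X : 'M[R]_5) : Prop :=
  exists b8 b9 b10 : R, X = b8 *: eb 8 + b9 *: eb 9 + b10 *: eb 10.

Definition in_m (X : 'M[R]_5) : Prop :=
  exists c : 'I_7 -> R, X = \sum_(i < 7) c i *: eb i.+1.

(* SO(3) as 3x3 special orthogonal matrices, embedded in SO(5) acting on
   the coordinates 3,4,5 (Lie algebra span{e8,e9,e10}) *)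
Definition in_SO3 (h : 'M[R]_3) : Prop := h^T *m h = 1%:M /\ \det h = 1.

Definition embSO3 (h : 'M[R]_3) : 'M[R]_5 :=
  \matrix_(i < 5, j < 5)
    if (i < 2)%N && (j < 2)%N then (i == j)%:R
    else if (2 <= i)%N && (2 <= j)%N then h (inord (i - 2)) (inord (j - 2))
    else 0.

Definition Ad (g X : 'M[R]_5) : 'M[R]_5 := g *m X *m invmx g.

Definition phi0 (h : 'M[R]_3) : 'M[R]_3 := 1%:M.
Definition dphi0 (X : 'M[R]_5) : 'M[R]_5 := 0.

(* the linear map alpha : so(5) -> so(3) determined by the images a i of
   the basis vectors e_{i+1}: alpha = sum_k e^k (x) a_k *)
Definition alpha_of (a : 'I_10 -> 'M[R]_5) (X : 'M[R]_5) : 'M[R]_5 :=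
  \sum_(i < 10) edo i X *: a i.

(* Wang's theorem conditions for phi = phi_0 *)
Definition wang_invariant (a : 'I_10 -> 'M[R]_5) : Prop :=
  (forall i, in_so3 (a i)) /\
  (forall X, in_so3 X -> alpha_of a X = dphi0 X) /\
  (forall h, in_SO3 h -> forall X, in_so5 X ->
     alpha_of a (Ad (embSO3 h) X) = Ad (embSO3 (phi0 h)) (alpha_of a X)).

Definition curv (a : 'I_10 -> 'M[R]_5) (X Y : 'M[R]_5) : 'M[R]_5 :=
  lbr (alpha_of a X) (alpha_of a Y) - alpha_of a (lbr X Y).

Definition wedge (i j : nat) (X Y : 'M[R]_5) : R := ed i X * ed j Y - ed j X * ed i Y.
Definition omega (X Y : 'M[R]_5) : R := wedge 2 5 X Y + wedge 3 6 X Y + wedge 4 7 X Y.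

End SO5.

(* Main.v *)
Require Import Defs.
From HB Require Import structures.
From mathcomp Require Import all_boot all_order all_algebra.
From mathcomp Require Import reals.
From mathcomp Require Import ring lra.
Import Order.TTheory GRing.Theory Num.Theory.
Local Open Scope ring_scope.

Lemma eq_inord n p q : (p <= n)%N -> (q <= n)%N ->
  (@inord n p == inord q) = (p == q).
Proof. by move=> hp hq; rewrite -val_eqE /= !inordK. Qed.

Lemma inordE n p : (p <= n)%N -> nat_of_ord (@inord n p) = p.
Proof. exact: inordK. Qed.

Lemma sum5 (V : zmodType) (F : 'I_5 -> V) :
  \sum_(i < 5) F i = F (inord 0) + F (inord 1) + F (inord 2) + F (inord 3) + F (inord 4).
Proof.
rewrite !big_ord_recl big_ord0 addr0 !addrA.
by congr (_+_+_+_+_); congr F; apply/val_inj; rewrite /= inordK.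
Qed.

Lemma sum7 (V : zmodType) (F : 'I_7 -> V) :
  \sum_(i < 7) F i = F (inord 0) + F (inord 1) + F (inord 2) + F (inord 3) + F (inord 4)
   + F (inord 5) + F (inord 6).
Proof.
rewrite !big_ord_recl big_ord0 addr0 !addrA.
by congr (_+_+_+_+_+_+_); congr F; apply/val_inj; rewrite /= inordK.
Qed.

Lemma sum10 (V : zmodType) (F : 'I_10 -> V) :
  \sum_(i < 10) F i = F (inord 0) + F (inord 1) + F (inord 2) + F (inord 3) + F (inord 4)
   + F (inord 5) + F (inord 6) + F (inord 7) + F (inord 8) + F (inord 9).
Proof.
rewrite !big_ord_recl big_ord0 addr0 !addrA.
by congr (_+_+_+_+_+_+_+_+_+_); congr F; apply/val_inj; rewrite /= inordK.
Qed.

Section S.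
Variable R : realType.

Lemma alphaE (a : 'I_10 -> 'M[R]_5) X : alpha_of a X =
  ed 1 X *: a (inord 0) + ed 2 X *: a (inord 1) + ed 3 X *: a (inord 2) + ed 4 X *: a (inord 3)
  + ed 5 X *: a (inord 4) + ed 6 X *: a (inord 5) + ed 7 X *: a (inord 6)
  + ed 8 X *: a (inord 7) + ed 9 X *: a (inord 8) + ed 10 X *: a (inord 9).
Proof. by rewrite /alpha_of sum10 /edo !inordE. Qed.

Lemma mulmx_col1 (A B : 'M[R]_5) i j : (forall l, B l j = (l == j)%:R) -> (A *m B) i j = A i j.
Proof.
move=> H; rewrite mxE (bigD1 j) //= H eqxx mulr1 big1 ?addr0 // => l /negbTE hl.
by rewrite H hl mulr0.
Qed.

Lemma mulmx_row1 (A B : 'M[R]_5) i j : (forall l, A i l = (i == l)%:R) -> (A *m B) i j = B i j.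
Proof.
move=> H; rewrite mxE (bigD1 i) //= H eqxx mul1r big1 ?addr0 // => l /negbTE hl.
by rewrite H eq_sym hl mul0r.
Qed.

Lemma emb_col1 (h : 'M[R]_3) l : embSO3 h l (inord 1) = (l == inord 1)%:R.
Proof.
rewrite mxE inordE //; case: l => [[|[|l]] hl] //=.
by rewrite -val_eqE /= inordE.
Qed.

Lemma emb_row0 (h : 'M[R]_3) l : embSO3 h (inord 0) l = (inord 0 == l)%:R.
Proof.
rewrite mxE inordE //; case: l => [[|[|l]] hl] //=.
by rewrite -val_eqE /= inordE.
Qed.

Lemma Ad01 (h : 'M[R]_3) X : Ad (embSO3 h) X (inord 0) (inord 1) = X (inord 0) (inord 1).
Proof.
rewrite /Ad mulmx_col1; first by rewrite mulmx_row1 // => l; rewrite emb_row0.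
move=> l; case: (boolP (embSO3 h \in unitmx)) => U; last first.
  by rewrite invmx_out ?emb_col1 // inE.
have := mulVmx U; move/matrixP => /(_ l (inord 1)).
by rewrite mulmx_col1 ?mxE // => m; rewrite emb_col1.
Qed.

Lemma emb1 : embSO3 (1%:M : 'M[R]_3) = 1%:M.
Proof.
apply/matrixP => i j; rewrite !mxE.
case: i j => [[|[|[|[|[|i]]]]] hi] [[|[|[|[|[|j]]]]] hj] //=; rewrite ?eq_inord //.
Qed.

Lemma Ad1 (h : 'M[R]_3) X : Ad (embSO3 (phi0 h)) X = X.
Proof. by rewrite /phi0 /Ad emb1 invmx1 mulmx1 mul1mx. Qed.

Definition dg n (f : nat -> R) : 'M[R]_n := diag_mx (\row_(i<n) f i).

Lemma emb_dg f : embSO3 (dg 3 f) = dg 5 (fun i => if (i < 2)%N then 1 else f (i-2)%N).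
Proof.
apply/matrixP => i j; rewrite !mxE.
case: i j => [[|[|[|[|[|i]]]]] hi] [[|[|[|[|[|j]]]]] hj] //=; rewrite ?eq_inord ?inordE //.
Qed.

Lemma dg_sq n f : (forall i, f i * f i = 1) -> dg n f *m dg n f = 1%:M.
Proof.
move=> H; apply/matrixP => i j; rewrite /dg mul_diag_mx !mxE.
by case: eqP => [->|]; rewrite ?mulr1n ?mulr0n ?mulr0 ?H.
Qed.

Lemma inv_dg n f : (forall i, f i * f i = 1) -> invmx (dg n.+1 f) = dg n.+1 f.
Proof.
move=> H; have E := @dg_sq n.+1 f H.
have [U _] := mulmx1_unit E.
by rewrite -[invmx _]mulmx1 -E mulmxA mulVmx // mul1mx.
Qed.

Lemma SO3_dg f : (forall i, f i * f i = 1) -> f 0%N * (f 1%N * f 2%N) = 1 -> in_SO3 (dg 3 f).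
Proof.
move=> H D; split; first by rewrite /dg tr_diag_mx (@dg_sq 3 f H).
by rewrite det_diag !big_ord_recl big_ord0 !mxE /= mulr1.
Qed.

Definition f1 (i : nat) : R := if i == 2%N then 1 else -1.
Definition f2 (i : nat) : R := if i == 0%N then 1 else -1.
Lemma f1sq i : f1 i * f1 i = 1. Proof. by rewrite /f1; case: ifP; rewrite ?mulr1 ?mulrNN ?mulr1. Qed.
Lemma f2sq i : f2 i * f2 i = 1. Proof. by rewrite /f2; case: ifP; rewrite ?mulr1 ?mulrNN ?mulr1. Qed.
Lemma SO1 : in_SO3 (dg 3 f1). Proof. by apply: SO3_dg; [exact: f1sq| rewrite /f1 /= mulr1 mulrNN mulr1]. Qed.
Lemma SO2 : in_SO3 (dg 3 f2). Proof. by apply: SO3_dg; [exact: f2sq| rewrite /f2 /= mul1r mulrNN mulr1]. Qed.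

Lemma so5_eb k : (k < 10)%N -> in_so5 (eb R k.+1).
Proof.
move=> hk; exists (fun i : 'I_10 => ((i:nat) == k)%:R).
rewrite sum10 /ebo !inordE //=.
case: k hk => [|[|[|[|[|[|[|[|[|[|k]]]]]]]]]] //= _;
 by rewrite ?scale0r ?scale1r ?addr0 ?add0r.
Qed.

Ltac simpE := rewrite ?(subr0, sub0r, mul0r, mulr0, mul1r, mulr1, mulrN, mulNr, opprK, oppr0, scale0r, scale1r, scaleN1r, scaleNr, scaler0, addr0, add0r).

Lemma alpha_eb a k : (k < 10)%N -> alpha_of a (eb R k.+1) = a (inord k).
Proof.
case: k => [|[|[|[|[|[|[|[|[|[|k]]]]]]]]]] //= _;
rewrite alphaE /ed /entry /eb /Emx !mxE /= !eq_inord //=; by simpE.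
Qed.

Lemma sq5 (f : nat -> R) : (forall i, f i * f i = 1) -> forall i : nat, (if (i < 2)%N then 1 else f (i-2)%N) * (if (i < 2)%N then 1 else f (i-2)%N) = 1.
Proof. by move=> H i; case: ifP; rewrite ?mulr1. Qed.


Lemma Adf1 a k : (k < 10)%N -> alpha_of a (Ad (embSO3 (dg 3 f1)) (eb R k.+1)) =
  if (k \in [:: 1; 2; 4; 5; 8; 9])%N then - a (inord k) else a (inord k).
Proof.
rewrite emb_dg /Ad inv_dg; last exact: sq5 f1sq.
case: k => [|[|[|[|[|[|[|[|[|[|k]]]]]]]]]] //= _;
rewrite /dg mul_diag_mx mul_mx_diag alphaE /ed /entry /eb /Emx !mxE /= !eq_inord // !inordE //= /f1 /=; by simpE.
Qed.

Lemma Adf2 a k : (k < 10)%N -> alpha_of a (Ad (embSO3 (dg 3 f2)) (eb R k.+1)) =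
  if (k \in [:: 2; 3; 5; 6; 7; 8])%N then - a (inord k) else a (inord k).
Proof.
rewrite emb_dg /Ad inv_dg; last exact: sq5 f2sq.
case: k => [|[|[|[|[|[|[|[|[|[|k]]]]]]]]]] //= _;
rewrite /dg mul_diag_mx mul_mx_diag alphaE /ed /entry /eb /Emx !mxE /= !eq_inord // !inordE //= /f2 /=; by simpE.
Qed.

Lemma negeq0 (x : 'M[R]_5) : - x = x -> x = 0.
Proof.
move/matrixP=> E; apply/matrixP => i j; move: (E i j); rewrite !mxE; lra.
Qed.

Lemma fwd (a : 'I_10 -> 'M[R]_5) : wang_invariant a -> forall k, (0 < k < 10)%N -> a (inord k) = 0.
Proof.
case=> H1 [H2 H3] k /andP[k0 k10].
have G1 j : (j < 10)%N -> (j \in [:: 1; 2; 4; 5; 8; 9])%N -> a (inord j) = 0.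
  move=> hj hin; apply: negeq0.
  have := H3 _ SO1 _ (@so5_eb _ hj); rewrite Ad1 Adf1 // alpha_eb // hin; exact.
have G2 j : (j < 10)%N -> (j \in [:: 2; 3; 5; 6; 7; 8])%N -> a (inord j) = 0.
  move=> hj hin; apply: negeq0.
  have := H3 _ SO2 _ (@so5_eb _ hj); rewrite Ad1 Adf2 // alpha_eb // hin; exact.
case: k k0 k10 => [|[|[|[|[|[|[|[|[|[|k]]]]]]]]]] //= _ _;
  by [apply: G1 | apply: G2].
Qed.

Lemma alpha_B (a : 'I_10 -> 'M[R]_5) B : (forall i:'I_10, a i = if (i == 0%N :> nat) then B else 0) ->
  forall X, alpha_of a X = ed 1 X *: B.
Proof. move=> Ha X; rewrite alphaE !Ha !inordE //=; by simpE. Qed.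

Lemma bwd (a : 'I_10 -> 'M[R]_5) b8 b9 b10 :
  (forall i:'I_10, a i = if (i == 0%N :> nat) then b8 *: eb R 8 + b9 *: eb R 9 + b10 *: eb R 10 else 0) ->
  wang_invariant a.
Proof.
move=> Ha; split; [|split].
- move=> i; rewrite Ha; case: ifP => _; first by exists b8, b9, b10.
  by exists 0, 0, 0; simpE.
- move=> X [c8 [c9 [c10 ->]]]; rewrite (alpha_B _ _ Ha) /dphi0 /ed /entry /eb /Emx !mxE !eq_inord //=; by simpE.
- by move=> h _ X _; rewrite Ad1 !(alpha_B _ _ Ha) /ed /entry Ad01.
Qed.

Lemma lbrZ (B : 'M[R]_5) x y : lbr (x *: B) (y *: B) = 0.
Proof. by rewrite /lbr -!scalemxAl -!scalemxAr !scalerA mulrC subrr. Qed.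

Definition mt (c : 'I_7 -> R) (p q : nat) : R :=
  match p, q with
  | 0, 1 => c (inord 0) | 0, 2 => c (inord 1) | 0, 3 => c (inord 2) | 0, 4 => c (inord 3)
  | 1, 0 => - c (inord 0) | 1, 2 => c (inord 4) | 1, 3 => c (inord 5) | 1, 4 => c (inord 6)
  | 2, 0 => - c (inord 1) | 3, 0 => - c (inord 2) | 4, 0 => - c (inord 3)
  | 2, 1 => - c (inord 4) | 3, 1 => - c (inord 5) | 4, 1 => - c (inord 6)
  | _, _ => 0
  end.

Lemma mentry (c : 'I_7 -> R) p q : (p < 5)%N -> (q < 5)%N ->
  (\sum_(i < 7) c i *: eb R i.+1) (inord p) (inord q) = mt c p q.
Proof.
rewrite sum7 !inordE // /eb /Emx !mxE.
case: p => [|[|[|[|[|p]]]]] // _; case: q => [|[|[|[|[|q]]]]] // _;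
  rewrite !eq_inord //= /mt; by simpE.
Qed.

Lemma lbr01 (X Y : 'M[R]_5) : in_m X -> in_m Y -> ed 1 (lbr X Y) = - omega X Y.
Proof.
move=> [c EX] [d EY]; rewrite /omega /wedge /ed /entry /lbr !mxE !sum5 EX EY !mentry // /mt /=.
ring.
Qed.

End S.

Lemma part1 (R : realType) (a : 'I_10 -> 'M[R]_5) :
     wang_invariant a <->
     exists b8 b9 b10 : R,
       forall i : 'I_10,
         a i = if (i == 0%N :> nat)
               then b8 *: eb R 8 + b9 *: eb R 9 + b10 *: eb R 10
               else 0.
Proof.
split; last by case=> b8 [b9 [b10 Ha]]; exact: bwd _ _ _ _ Ha.
move=> W; have [b8 [b9 [b10 E]]] := W.1 (inord 0).
exists b8, b9, b10 => -[[|k] hk] /=.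
  have -> : Ordinal hk = inord 0 by apply/val_inj; rewrite /= inordK.
  exact: E.
have -> : Ordinal hk = inord k.+1 by apply/val_inj; rewrite /= inordK.
by apply: (@fwd R a W k.+1); rewrite /= hk.
Qed.

Theorem lemma4p4 (R : realType) :
  (forall a : 'I_10 -> 'M[R]_5,
     wang_invariant a <->
     exists b8 b9 b10 : R,
       forall i : 'I_10,
         a i = if (i == 0%N :> nat)
               then b8 *: eb R 8 + b9 *: eb R 9 + b10 *: eb R 10
               else 0) /\
  (forall a : 'I_10 -> 'M[R]_5,
     wang_invariant a ->
     exists f : 'M[R]_5,
       in_so3 f /\
       forall X Y : 'M[R]_5, in_m X -> in_m Y ->
         curv a X Y = omega X Y *: f).
Proof.
split; first exact: part1.
move=> a /part1 [b8 [b9 [b10 Ha]]].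
exists (b8 *: eb R 8 + b9 *: eb R 9 + b10 *: eb R 10); split; first by exists b8, b9, b10.
move=> X Y hX hY; rewrite /curv !(alpha_B _ _ _ Ha) lbrZ sub0r lbr01 // scaleNr opprK.
by [].
Qed.
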